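(* Let $E$ be an acyclic directed graph and let $G(E)$ be a dense subsemigroup of a topological semigroup $S$. Then $s^2=0$ for every element $s\in S$ which is not an idempotent.
   Context: All spaces are Hausdorff. A directed graph $E=(E^0,E^1,r,s)$ has vertices $E^0$, edges $E^1$, source/range maps $s,r:E^1\to E^0$; paths are vertices and sequences of edges $e_1\ldots e_n$ with $r(e_i)=s(e_{i+1})$; a cycle is a path of non-zero length with equal source and range; acyclic means no cycles. The graph inverse semigroup $G(E)$ is the semigroup with zero $0$ generated by $E^0$, $E^1$, $E^{-1}=\{e^{-1}\mid e\in E^1\}$ subject to: for $a,b\in E^0$, $e,f\in E^1$: $ab=a$ if $a=b$, else $0$; $s(e)e=er(e)=e$; $e^{-1}s(e)=r(e)e^{-1}=e^{-1}$; $e^{-1}f=r(e)$ if $e=f$, else $0$. *)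

(* Defs.v *)
From mathcomp Require Import all_boot.
From mathcomp Require Import boolp classical_sets topology.
Set Implicit Arguments. Unset Strict Implicit. Unset Printing Implicit Defensive.
Local Open Scope classical_set_scope.

Section GraphInverseSemigroup.
Variables (V Ed : Type) (src rng : Ed -> V).

(* [path_to w l]: the edge list l = e1 ... en is a path (r(e_i) = s(e_{i+1}))
   whose range is the vertex w.  The empty list with range w is the
   vertex (path of length 0) w. *)
Fixpoint path_to (w : V) (l : seq Ed) : Prop :=
  match l with
  | [::] => True
  | e :: l' =>
      match l' with
      | [::] => rng e = w
      | f :: _ => rng e = src f
      end /\ path_to w l'
  end.

Definition psrc (w : V) (l : seq Ed) : V :=
  if l is e :: _ then src e else w.

Definition acyclic : Prop :=
  forall (w : V) (l : seq Ed), l <> [::] -> path_to w l -> psrc w l <> w.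

(* Raw carrier of G(E): GZ is the zero, GP w a b stands for a b^{-1},
   where a, b are paths with common range w. *)
Inductive gis : Type :=
| GZ : gis
| GP : V -> seq Ed -> seq Ed -> gis.

Definition gis_set : set gis :=
  fun x => match x with
           | GZ => True
           | GP w a b => path_to w a /\ path_to w b
           end.

Definition gvert (v : V) : gis := GP v [::] [::].
Definition gedge (e : Ed) : gis := GP (rng e) [:: e] [::].
Definition gghost (e : Ed) : gis := GP (rng e) [::] [:: e].

(* Multiplication in G(E):
   (a b^{-1})(c d^{-1}) = a c' d^{-1}      if c = b c',
                        = a (d b')^{-1}    if b = c b',
                        = 0                otherwise. *)
Definition gis_mul (x y : gis) : gis :=
  match x, y with
  | GP w1 a b, GP w2 c d =>
      if pselect (take (size b) c = b /\ psrc w2 c = psrc w1 b) then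
        GP w2 (a ++ drop (size b) c) d
      else if pselect (take (size c) b = c /\ psrc w1 b = psrc w2 c) then
        GP w1 a (d ++ drop (size c) b)
      else GZ
  | _, _ => GZ
  end.

End GraphInverseSemigroup.

Definition topological_semigroup (S : topologicalType) (mul : S -> S -> S) : Prop :=
  hausdorff_space S /\ associative mul /\
  continuous (fun p : S * S => mul p.1 p.2).

(* Main.v *)
Require Import Defs.
From mathcomp Require Import all_boot.
From mathcomp Require Import boolp classical_sets topology.
Local Open Scope classical_set_scope.

Lemma path_cat_aux (V Ed : Type) (src rng : Ed -> V) (b c : seq Ed) (w w' : V) :
  b <> [::] -> c <> [::] -> path_to src rng w b -> path_to src rng w' (b ++ c) ->
  path_to src rng w' c /\ psrc src w' c = w.
Proof.
elim: b => [//|e b IH] _ Hc.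
case: b IH => [|f b] IH /=.
- clear IH; case: c Hc => [|g c] _ /= [He _] [H1 H2]; split => //; congruence.
- move=> [_ Hb] [_ Hbc]; exact: IH.
Qed.

Lemma sq_cases (V Ed : Type) (src rng : Ed -> V) (x : gis V Ed) :
  acyclic src rng -> gis_set src rng x ->
  gis_mul src x x = x \/ gis_mul src x x = GZ V Ed.
Proof.
move=> Hac; case: x => [|w a b] /=; first by right.
move=> [Ha Hb].
have key : forall a b : seq Ed, path_to src rng w a -> path_to src rng w b ->
    take (size b) a = b -> psrc src w a = psrc src w b -> drop (size b) a = [::].
  move=> a0 b0 Ha0 Hb0 Ht Hs.
  case Hd: (drop (size b0) a0) => [|g d] //; exfalso.
  have Heq : a0 = b0 ++ (g :: d) by rewrite -Hd -{1}Ht cat_take_drop.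
  case: b0 Hb0 Ht Hs Heq Hd => [|h b0] Hb0 Ht Hs Heq Hd.
  - rewrite /= in Heq; subst a0.
    by apply: (Hac w (g :: d)) => //.
  - rewrite Heq in Ha0.
    have [P1 P2] := @path_cat_aux V Ed src rng (h :: b0) (g :: d) w w ltac:(by []) ltac:(by []) Hb0 Ha0.
    by apply: (Hac w (g :: d)).
destruct pselect as [[Ht Hs]|Hn].
  by left; rewrite (key a b) ?cats0.
destruct pselect as [[Ht Hs]|Hn2]; last by right.
by left; rewrite (key b a) ?cats0.
Qed.

Theorem lemma4p2 (V Ed : Type) (src rng : Ed -> V)
    (S : topologicalType) (mul : S -> S -> S) (iota : gis V Ed -> S) :
  acyclic src rng ->
  topological_semigroup mul ->
  (* iota embeds G(E) into S as a subsemigroup ... *)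
  (forall x y, gis_set src rng x -> gis_set src rng y ->
     iota x = iota y -> x = y) ->
  (forall x y, gis_set src rng x -> gis_set src rng y ->
     iota (gis_mul src x y) = mul (iota x) (iota y)) ->
  (* ... which is dense in S *)
  closure (iota @` gis_set src rng) = setT ->
  forall s : S, mul s s <> s -> mul s s = iota (GZ V Ed).
Proof.
move=> Hac [Hh [_ Hc]] _ Hmul Hd s Hs1.
apply: contrapT => Hs2.
have T2 := Hh; rewrite open_hausdorff in T2.
have /T2 [[U W] /= [sU sW] [oU oW /eqP UW]] : mul s s != s by apply/eqP.
have /T2 [[U' W'] /= [sU' zW'] [oU' oW' /eqP UW']] : mul s s != iota (GZ V Ed) by apply/eqP.
have cf : (fun x => mul x x) @ s --> mul s s.
  apply: (@continuous2_cvg _ S S S (nbhs s) _ (fun x => x) (fun x => x) mul s s); [|exact: cvg_id|exact: cvg_id].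
  exact: (Hc (s, s)).
have nO : nbhs (mul s s) (U `&` U').
  apply: open_nbhs_nbhs; split; first exact: openI.
  by split; apply/set_mem.
have nN : nbhs s (W `&` ((fun x => mul x x) @^-1` (U `&` U'))).
  apply: filterI; first by apply: open_nbhs_nbhs; split => //; apply/set_mem.
  exact: cf.
have : closure (iota @` gis_set src rng) s by rewrite Hd.
move=> /(_ _ nN) [y [[g Hg <-] [yW [yU yU']]]].
rewrite -Hmul // in yU yU'.
case: (@sq_cases V Ed src rng g Hac Hg) => E; rewrite E in yU yU'.
- by have : (U `&` W) (iota g) by []; rewrite UW.
- have : (U' `&` W') (iota (GZ V Ed)) by split => //; apply/set_mem.
  by rewrite UW'.
Qed.
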